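(* In $\lambda_{\mathrm{act}}$: if $\Gamma ; \Delta \vdash \mathcal{C}$ and $\mathcal{C} \equiv \mathcal{D}$ for some configuration $\mathcal{D}$, then $\Gamma ; \Delta \vdash \mathcal{D}$.
   Context: The calculus $\lambda_{\mathrm{act}}$. Types $A,B,C ::= \mathbf{1} \mid A \xrightarrow{C} B \mid \mathsf{ActorRef}(A)$; values $V,W ::= \alpha \mid \lambda x.M \mid ()$ ($\alpha$ a variable or name); computations $M,N ::= V\,W \mid \mathbf{let}\ x \Leftarrow M\ \mathbf{in}\ N \mid \mathbf{return}\ V \mid \mathbf{spawn}\ M \mid \mathbf{send}\ V\ W \mid \mathbf{receive} \mid \mathbf{self}$. Value typing $\Gamma\vdash V:A$ ($\alpha$ looked up in $\Gamma$; $\lambda x.M : A\xrightarrow{C}B$ if $\Gamma,x:A\mid C\vdash M:B$; $():\mathbf 1$) and computation typing $\Gamma\mid C\vdash M:A$ with mailbox type $C$ ($V\,W:B$ if $V:A\xrightarrow{C}B$, $W:A$; $\mathbf{let}$ with both parts under mailbox $C$; $\mathbf{return}\ V:A$ if $V:A$; $\mathbf{send}\ V\ W:\mathbf 1$ if $V:A$, $W:\mathsf{ActorRef}(A)$; $\Gamma\mid A\vdash\mathbf{receive}:A$; $\Gamma\mid C\vdash \mathbf{spawn}\ M:\mathsf{ActorRef}(A)$ if $\Gamma\mid A\vdash M:\mathbf 1$; $\Gamma\mid A\vdash\mathbf{self}:\mathsf{ActorRef}(A)$). Configurations $\mathcal{C},\mathcal{D},\mathcal{E} ::= \mathcal{C}\parallel\mathcal{D}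 \mid (\nu a)\mathcal{C} \mid \langle a, M, \vec V\rangle$, where $\langle a, M, \vec V\rangle$ is an actor named $a$ evaluating $M$ with mailbox $\vec V = V_1\cdot\ldots\cdot V_n$. Configuration contexts $G ::= [\,]\mid G\parallel\mathcal{C}\mid(\nu a)G$. Configuration typing $\Gamma;\Delta\vdash\mathcal{C}$ ($\Delta$ linear, names to types): (Par) $\Gamma;\Delta_1\vdash\mathcal{C}_1$ and $\Gamma;\Delta_2\vdash\mathcal{C}_2$ give $\Gamma;\Delta_1,\Delta_2\vdash\mathcal{C}_1\parallel\mathcal{C}_2$ (disjoint); (Pid) $\Gamma,a:\mathsf{ActorRef}(A);\Delta,a:A\vdash\mathcal{C}$ gives $\Gamma;\Delta\vdash(\nu a)\mathcal{C}$; (Actor) if $\Gamma,a:\mathsf{ActorRef}(A)\mid A\vdash M:\mathbf 1$ and $\Gamma,a:\mathsf{ActorRef}(A)\vdash V_i:A$ for all $i$, then $\Gamma,a:\mathsf{ActorRef}(A);a:A\vdash\langle a,M,\vec V\rangle$. Structural congruence $\equiv$: the least congruence closed under $G[-]$ with $\mathcal{C}\parallel\mathcal{D}\equiv\mathcal{D}\parallel\mathcal{C}$, $\mathcal{C}\parallel(\mathcal{D}\parallel\mathcal{E})\equiv(\mathcal{C}\parallel\mathcal{D})\parallel\mathcal{E}$, and $\mathcal{C}\parallel(\nu a)\mathcal{D}\equiv(\nu a)(\mathcal{C}\parallel\mathcal{D})$ if $a\notin\mathsf{fv}(\mathcal{C})$. *)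

(* Defs.v *)
From Stdlib Require Import List Arith.
Import ListNotations.

(* Identifiers: variables and names share one namespace (alpha ranges over both). *)
Definition ident := nat.

Inductive ty : Type :=
| TUnit : ty
| TFun : ty -> ty -> ty -> ty         (* TFun A C B  =  A -C-> B *)
| TRef : ty -> ty.

Inductive val : Type :=
| VId : ident -> val
| VLam : ident -> comp -> val
| VUnit : val
with comp : Type :=
| CApp : val -> val -> comp
| CLet : ident -> comp -> comp -> comp
| CReturn : val -> comp
| CSpawn : comp -> comp
| CSend : val -> val -> comp
| CReceive : comp
| CSelf : comp.

Inductive config : Type :=
| Par : config -> config -> config
| Nu : ident -> config -> config
| Actor : ident -> comp -> list val -> config.

Fixpoint fv_val (a : ident) (V : val) : bool :=
  match V with
  | VId b => Nat.eqb a b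
  | VLam x M => negb (Nat.eqb a x) && fv_comp a M
  | VUnit => false
  end
with fv_comp (a : ident) (M : comp) : bool :=
  match M with
  | CApp V W => fv_val a V || fv_val a W
  | CLet x M N => fv_comp a M || (negb (Nat.eqb a x) && fv_comp a N)
  | CReturn V => fv_val a V
  | CSpawn M => fv_comp a M
  | CSend V W => fv_val a V || fv_val a W
  | CReceive => false
  | CSelf => false
  end.

Fixpoint fv_config (a : ident) (C : config) : bool :=
  match C with
  | Par C1 C2 => fv_config a C1 || fv_config a C2
  | Nu b C => negb (Nat.eqb a b) && fv_config a C
  | Actor b M Vs => Nat.eqb a b || fv_comp a M || existsb (fv_val a) Vs
  end.

Definition env := ident -> option ty.
Definition extend (G : env) (x : ident) (A : ty) : env :=
  fun y => if Nat.eqb y x then Some A else G y.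

Definition lenv := ident -> option ty.
Definition lempty : lenv := fun _ => None.
Definition lsingle (a : ident) (A : ty) : lenv :=
  fun b => if Nat.eqb b a then Some A else None.
Definition ldisjoint (D1 D2 : lenv) : Prop :=
  forall a, D1 a = None \/ D2 a = None.
Definition lunion (D1 D2 : lenv) : lenv :=
  fun a => match D1 a with Some A => Some A | None => D2 a end.

Inductive vtyped : env -> val -> ty -> Prop :=
| T_Id : forall G a A, G a = Some A -> vtyped G (VId a) A
| T_Lam : forall G x M A C B,
    ctyped (extend G x A) C M B -> vtyped G (VLam x M) (TFun A C B)
| T_Unit : forall G, vtyped G VUnit TUnit
with ctyped : env -> ty -> comp -> ty -> Prop :=
| T_App : forall G C V W A B,
    vtyped G V (TFun A C B) -> vtyped G W A -> ctyped G C (CApp V W) B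
| T_Let : forall G C x M N A B,
    ctyped G C M A -> ctyped (extend G x A) C N B -> ctyped G C (CLet x M N) B
| T_Return : forall G C V A, vtyped G V A -> ctyped G C (CReturn V) A
| T_Send : forall G C V W A,
    vtyped G V A -> vtyped G W (TRef A) -> ctyped G C (CSend V W) TUnit
| T_Receive : forall G A, ctyped G A CReceive A
| T_Spawn : forall G C M A, ctyped G A M TUnit -> ctyped G C (CSpawn M) (TRef A)
| T_Self : forall G A, ctyped G A CSelf (TRef A).

Inductive ctyped_conf : env -> lenv -> config -> Prop :=
| T_Par : forall G D1 D2 C1 C2,
    ctyped_conf G D1 C1 -> ctyped_conf G D2 C2 -> ldisjoint D1 D2 ->
    ctyped_conf G (lunion D1 D2) (Par C1 C2)
| T_Pid : forall G D a A C,
    D a = None ->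
    ctyped_conf (extend G a (TRef A)) (extend D a A) C ->
    ctyped_conf G D (Nu a C)
| T_Actor : forall G a A M Vs,
    G a = Some (TRef A) ->
    ctyped G A M TUnit ->
    (forall V, In V Vs -> vtyped G V A) ->
    ctyped_conf G (lsingle a A) (Actor a M Vs).

Inductive scong : config -> config -> Prop :=
| SC_refl : forall C, scong C C
| SC_sym : forall C D, scong C D -> scong D C
| SC_trans : forall C D E, scong C D -> scong D E -> scong C E
| SC_comm : forall C D, scong (Par C D) (Par D C)
| SC_assoc : forall C D E, scong (Par C (Par D E)) (Par (Par C D) E)
| SC_extr : forall C a D, fv_config a C = false ->
    scong (Par C (Nu a D)) (Nu a (Par C D))
| SC_ctx_par : forall C D E, scong C D -> scong (Par C E) (Par D E)
| SC_ctx_nu : forall a C D, scong C D -> scong (Nu a C) (Nu a D).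

(* Main.v *)
Require Import Defs.
From Stdlib Require Import List Arith Bool FunctionalExtensionality.
Import ListNotations.

Scheme vt_ind := Induction for vtyped Sort Prop
with ct_ind := Induction for ctyped Sort Prop.
Combined Scheme vct_ind from vt_ind, ct_ind.

Lemma extend_agree : forall (G G' : env) x A (P : ident -> bool),
  (forall a, P a = true -> G a = G' a) ->
  forall a, negb (Nat.eqb a x) && P a = true -> extend G x A a = extend G' x A a.
Proof.
  intros G G' x A P H a Ha. unfold extend. destruct (Nat.eqb a x); auto.
Qed.

Lemma typ_agree :
  (forall G V A, vtyped G V A -> forall G', (forall a, fv_val a V = true -> G a = G' a) -> vtyped G' V A) /\
  (forall G C M B, ctyped G C M B -> forall G', (forall a, fv_comp a M = true -> G a = G' a) -> ctyped G' C M B).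
Proof.
  apply vct_ind; intros; simpl in *.
  - constructor. rewrite <- H; auto. apply Nat.eqb_refl.
  - constructor. apply H. intros b Hb. unfold extend.
    destruct (Nat.eqb b x) eqn:E; auto. apply H0. rewrite E. simpl. exact Hb.
  - constructor.
  - econstructor; [apply H | apply H0]; intros; apply H1; rewrite H2; auto with bool.
  - econstructor; [apply H|apply H0].
    + intros; apply H1; rewrite H2; auto with bool.
    + intros b Hb. unfold extend. destruct (Nat.eqb b x) eqn:E; auto. apply H1.
      rewrite E, Hb. simpl. auto with bool.
  - constructor; auto.
  - econstructor; [apply H | apply H0]; intros; apply H1; rewrite H2; auto with bool.
  - constructor.
  - constructor; auto.
  - constructor.
Qed.

Lemma conf_agree : forall G D C, ctyped_conf G D C -> forall G',
  (forall a, fv_config a C = true -> G a = G' a) -> ctyped_conf G' D C.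
Proof.
  induction 1; intros G' HG; simpl in *.
  - constructor; auto.
    + apply IHctyped_conf1; intros b Hb; apply HG; rewrite Hb; auto.
    + apply IHctyped_conf2; intros b Hb; apply HG; rewrite Hb; auto with bool.
  - econstructor; eauto. apply IHctyped_conf. intros b Hb. unfold extend.
    destruct (Nat.eqb b a) eqn:E; auto. apply HG. rewrite E, Hb. auto.
  - constructor.
    + rewrite <- H. symmetry. apply HG. rewrite Nat.eqb_refl. auto.
    + apply (proj2 typ_agree) with G; auto. intros b Hb; apply HG; rewrite Hb; auto with bool.
    + intros V HV. apply (proj1 typ_agree) with G; auto. intros b Hb; apply HG.
      rewrite (proj2 (existsb_exists _ _)); auto with bool. eauto.
Qed.

Lemma dom_fv : forall G D C, ctyped_conf G D C -> forall a, D a <> None -> fv_config a C = true.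
Proof.
  induction 1; intros b Hb; simpl.
  - unfold lunion in Hb. destruct (D1 b) eqn:E.
    + rewrite IHctyped_conf1; auto. rewrite E; discriminate.
    + rewrite IHctyped_conf2; auto with bool.
  - destruct (Nat.eqb b a) eqn:E.
    + apply Nat.eqb_eq in E; subst. contradiction.
    + simpl. apply IHctyped_conf. unfold extend. rewrite E. auto.
  - unfold lsingle in Hb. destruct (Nat.eqb b a); auto.
Qed.

Lemma nfv_none : forall G D C a, ctyped_conf G D C -> fv_config a C = false -> D a = None.
Proof.
  intros. destruct (D a) eqn:E; auto. exfalso.
  assert (fv_config a C = true) by (apply (dom_fv G D C H); congruence). congruence.
Qed.

Lemma lunion_comm : forall D1 D2, ldisjoint D1 D2 -> lunion D1 D2 = lunion D2 D1.
Proof.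
  intros D1 D2 H. extensionality a. unfold lunion. destruct (H a) as [E|E]; rewrite E;
  destruct (D1 a), (D2 a); congruence.
Qed.

Lemma typ_comm : forall G D C E, ctyped_conf G D (Par C E) -> ctyped_conf G D (Par E C).
Proof.
  intros. inversion H; subst. rewrite lunion_comm by auto. constructor; auto.
  intro a; destruct (H6 a); auto.
Qed.

Lemma typ_assoc1 : forall G D C1 C2 C3, ctyped_conf G D (Par C1 (Par C2 C3)) ->
  ctyped_conf G D (Par (Par C1 C2) C3).
Proof.
  intros G D C1 C2 C3 H. inversion H as [? D1 Dr ? ? HC1 HR Hd| |]; subst.
  inversion HR as [? D0 D3 ? ? HC2 HC3 Hd'| |]; subst.
  assert (HE : lunion D1 (lunion D0 D3) = lunion (lunion D1 D0) D3).
  { extensionality a. unfold lunion. destruct (D1 a); auto. }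
  rewrite HE. constructor; [constructor| |]; auto.
  - intro a. destruct (Hd a) as [X|X]; auto. unfold lunion in X. destruct (D0 a); auto; discriminate.
  - intro a. unfold lunion. destruct (D1 a) eqn:E1.
    + destruct (Hd a) as [X|X]; [congruence|]. unfold lunion in X.
      destruct (D0 a); [discriminate|auto].
    + destruct (Hd' a); auto.
Qed.

Lemma typ_assoc2 : forall G D C1 C2 C3, ctyped_conf G D (Par (Par C1 C2) C3) ->
  ctyped_conf G D (Par C1 (Par C2 C3)).
Proof.
  intros. apply typ_comm. apply typ_assoc1. apply typ_comm. apply typ_assoc1. apply typ_comm. auto.
Qed.

Lemma typ_extr1 : forall G D C a E, fv_config a C = false ->
  ctyped_conf G D (Par C (Nu a E)) -> ctyped_conf G D (Nu a (Par C E)).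
Proof.
  intros G D C a E H H0. inversion H0 as [? D1 Dr ? ? HC HN Hd| |]; subst.
  inversion HN as [|? ? ? A ? Ha HE|]; subst.
  assert (N1 : D1 a = None) by (eapply nfv_none; eauto).
  econstructor.
  - unfold lunion. rewrite N1. auto.
  - assert (extend (lunion D1 Dr) a A = lunion D1 (extend Dr a A)).
    { extensionality b. unfold extend, lunion. destruct (Nat.eqb b a) eqn:E'; auto.
      apply Nat.eqb_eq in E'; subst. rewrite N1. auto. }
    rewrite H1. constructor; auto.
    + eapply conf_agree; eauto. intros b Hb. unfold extend.
      destruct (Nat.eqb b a) eqn:E'; auto. apply Nat.eqb_eq in E'; subst; congruence.
    + intro b. unfold extend. destruct (Nat.eqb b a) eqn:E'; auto.
      apply Nat.eqb_eq in E'; subst; auto.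
Qed.

Lemma typ_extr2 : forall G D C a E, fv_config a C = false ->
  ctyped_conf G D (Nu a (Par C E)) -> ctyped_conf G D (Par C (Nu a E)).
Proof.
  intros G D C a E H H0. inversion H0 as [|? ? ? A ? Ha HP|]; subst.
  inversion HP as [? D1 D2 ? ? HC HE Hd| |]; subst.
  match goal with Hx : lunion D1 D2 = _ |- _ => rename Hx into Heq end.
  assert (N1 : D1 a = None) by (eapply nfv_none; eauto).
  set (D2' := fun b => if Nat.eqb b a then None else D2 b).
  assert (HD : D = lunion D1 D2').
  { extensionality b. pose proof (f_equal (fun f => f b) Heq) as Hb. simpl in Hb.
    unfold extend, lunion, D2' in *. destruct (Nat.eqb b a) eqn:E'.
    - apply Nat.eqb_eq in E'; subst. rewrite N1. auto.
    - auto. }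
  assert (HD2 : D2 = extend D2' a A).
  { extensionality b. pose proof (f_equal (fun f => f b) Heq) as Hb. simpl in Hb.
    unfold extend, lunion, D2' in *. destruct (Nat.eqb b a) eqn:E'; auto.
    apply Nat.eqb_eq in E'; subst. rewrite N1 in Hb. auto. }
  rewrite HD. constructor.
  - eapply conf_agree; eauto. intros b Hb. unfold extend.
    destruct (Nat.eqb b a) eqn:E'; auto. apply Nat.eqb_eq in E'; rewrite E' in Hb; congruence.
  - econstructor.
    + unfold D2'. rewrite Nat.eqb_refl. auto.
    + rewrite <- HD2. auto.
  - intro b. destruct (Hd b); auto. right. unfold D2'. destruct (Nat.eqb b a); auto.
Qed.

Lemma scong_typ : forall C1 C2, scong C1 C2 -> forall G D,
  (ctyped_conf G D C1 -> ctyped_conf G D C2) /\ (ctyped_conf G D C2 -> ctyped_conf G D C1).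
Proof.
  induction 1; intros G0 D0.
  - tauto.
  - destruct (IHscong G0 D0); tauto.
  - destruct (IHscong1 G0 D0), (IHscong2 G0 D0); tauto.
  - split; apply typ_comm.
  - split; [apply typ_assoc1|apply typ_assoc2].
  - split; [apply typ_extr1|apply typ_extr2]; auto.
  - split; intro Ht; inversion Ht; subst; constructor; auto; eapply IHscong; eauto.
  - split; intro Ht; inversion Ht; subst; econstructor; eauto; eapply IHscong; eauto.
Qed.

Theorem lemma11 : forall (G : env) (D : lenv) (C1 C2 : config),
  ctyped_conf G D C1 -> scong C1 C2 -> ctyped_conf G D C2.
Proof.
  intros. apply (scong_typ C1 C2 H0 G D). auto.
Qed.
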